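(* Let $r,d\ge 1$ be integers, $N=d2^r$, and let $F_1,F_2,\dots,F_{\binom{N}{d}}$ enumerate the $d$-element subsets of $[N]$. For $i\in[\binom{N}{d}]$ and $j\in[dr]$, let $\beta(i,j)$ be the $j$-th bit of the $dr$-bit binary representation of $i$ if $i\le 2^{dr}$, and $\beta(i,j)=\star$ otherwise. Define the partial concept class $\mathbb{H}_{r,d}=\{h_{i,j}\}$ on $[d(2^r+r)]$ by $h_{i,j}(x)=1$ if $x\in F_i$, $h_{i,j}(x)=0$ if $x\in[N]\setminus F_i$, $h_{i,j}(N+j)=\beta(i,j)$, and $h_{i,j}(x)=\star$ for all other $x$. Then $d\le\mathrm{LD}(\mathbb{H}_{r,d})\le d+1$, and the SOA disambiguation of $\mathbb{H}_{r,d}$ (with respect to the natural ordering of $[d(2^r+r)]$) shatters the set $\{N+1,\dots,N+dr\}$; in particular its VC dimension is at least $dr$.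
   Context: Littlestone dimension, VC dimension and shattering of a partial class $\mathbb{H}\subseteq\{0,1,\star\}^{[n]}$ are as usual (a set/tree is shattered if every $0/1$ pattern/leaf is realized by some concept taking the required $0/1$ values), with $\mathrm{LD}(\emptyset)=-1$. For $\vec b\in\{0,1,\star\}^k$, $\mathbb{H}|_{\vec b}=\{h\in\mathbb{H}:h(i)=b_i\ \forall i\in[k]\}$. The SOA disambiguation is produced iteratively: for $k=1,\dots,n$, given the current class (values at $1,\dots,k-1$ already in $\{0,1\}$), for every $\vec b\in\{0,1\}^{k-1}$ choose $c\in\{0,1\}$ maximizing $\mathrm{LD}(\mathbb{H}|_{\vec b c})$ (ties broken toward $c=0$) and set $h(k):=c$ for every $h\in\mathbb{H}|_{\vec b\star}$; the final total class is the SOA disambiguation. *)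

(* Defs.v *)
From mathcomp Require Import all_boot all_order all_algebra.
Set Implicit Arguments. Unset Strict Implicit. Unset Printing Implicit Defensive.
Import Order.TTheory GRing.Theory Num.Theory.

(* Partial concepts on the domain [n], represented 0-indexed as 'I_n.
   Values {0,1,*} are option bool: Some false = 0, Some true = 1, None = star. *)
Definition pconcept (n : nat) := {ffun 'I_n -> option bool}.

Definition restr n (H : {set pconcept n}) (x : 'I_n) (b : bool) : {set pconcept n} :=
  [set h in H | h x == Some b].

(* lde H k <=> H shatters a complete mistake tree of depth k:
   depth 0: the single leaf (empty path) is realized, i.e. H is nonempty;
   depth k+1: some root label x such that both subtrees (edges x->0, x->1)
   are shattered by the corresponding restrictions of H. *)
Fixpoint lde n (H : {set pconcept n}) (k : nat) : bool :=
  match k with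
  | 0 => H != set0
  | k'.+1 => [exists x : 'I_n, lde (restr H x false) k' && lde (restr H x true) k']
  end.

(* Littlestone dimension, with LD(empty) = -1.  The max ranges over k <= n,
   which is no restriction: along any path of a shattered tree the labels are
   distinct, so shattered trees have depth <= n. *)
Definition LD n (H : {set pconcept n}) : int :=
  if H == set0 then (-1)%R else Posz (\max_(k < n.+1 | lde H k) k).

Definition shatters n (H : {set pconcept n}) (S : {set 'I_n}) : bool :=
  [forall f : {ffun 'I_n -> bool}, exists h in H, forall x in S, h x == Some (f x)].

Definition VCdim n (H : {set pconcept n}) : nat :=
  \max_(S : {set 'I_n} | shatters H S) #|S|.

(* H|_{b c} at step k, where b is the prefix of h on positions < k. *)
Definition soa_restr n (H : {set pconcept n}) (k : 'I_n) (h : pconcept n) (c : bool)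
  : {set pconcept n} :=
  [set g in H | [forall i : 'I_n, (i < k) ==> (g i == h i)] && (g k == Some c)].

(* choose c maximizing LD(H|_{b c}), ties broken toward c = 0 *)
Definition soa_choice n (H : {set pconcept n}) (k : 'I_n) (h : pconcept n) : bool :=
  (LD (soa_restr H k h false) < LD (soa_restr H k h true))%R.

Definition soa_upd n (H : {set pconcept n}) (k : 'I_n) (h : pconcept n) : pconcept n :=
  if h k is None then [ffun x => if x == k then Some (soa_choice H k h) else h x]
  else h.

Definition soa_step n (k : 'I_n) (H : {set pconcept n}) : {set pconcept n} :=
  [set soa_upd H k h | h in H].

Definition SOA n (H : {set pconcept n}) : {set pconcept n} :=
  foldl (fun H' k => soa_step k H') H (enum 'I_n).

(* i is 0-indexed (paper's i = our i + 1); bit j (0-indexed, least significant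
   first) of the dr-bit representation of i, or star if i >= 2^(dr). *)
Definition beta (d r i j : nat) : option bool :=
  if i < 2 ^ (d * r) then Some (odd (i %/ 2 ^ j)) else None.

(* domain 'I_(d*(2^r+r)); points x < N = d*2^r form [N]; point N + j is the
   paper's point N + (j+1). *)
Definition hij (r d : nat) (F : 'I_('C(d * 2 ^ r, d)) -> {set 'I_(d * 2 ^ r)})
  (i : 'I_('C(d * 2 ^ r, d))) (j : 'I_(d * r)) : pconcept (d * (2 ^ r + r)) :=
  [ffun x : 'I_(d * (2 ^ r + r)) =>
     if val x < d * 2 ^ r then Some [exists y in F i, val y == val x]
     else if val x == d * 2 ^ r + val j then beta d r i j else None].

Definition Hclass (r d : nat) (F : 'I_('C(d * 2 ^ r, d)) -> {set 'I_(d * 2 ^ r)})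
  : {set pconcept (d * (2 ^ r + r))} :=
  [set hij F i j | i : 'I_('C(d * 2 ^ r, d)), j : 'I_(d * r)].

(* Main.v *)
Require Import Defs.
From mathcomp Require Import all_boot all_order all_algebra.
From mathcomp Require Import zify.
Import Order.TTheory GRing.Theory Num.Theory.
Set Implicit Arguments. Unset Strict Implicit. Unset Printing Implicit Defensive.

Lemma restr_set0 n (x : 'I_n) b : restr set0 x b = set0.
Proof. by apply/setP => h; rewrite !inE. Qed.

Lemma lde_set0 n k : lde (set0 : {set pconcept n}) k = false.
Proof.
elim: k => [|k IH] /=; first by rewrite eqxx.
by apply/existsP => -[x]; rewrite !restr_set0 IH.
Qed.

Lemma restr_mono n (H H' : {set pconcept n}) x b :
  H \subset H' -> restr H x b \subset restr H' x b.
Proof.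
move=> s; apply/subsetP => h; rewrite !inE => /andP [hH ->].
by rewrite (subsetP s).
Qed.

Lemma lde_mono n k (H H' : {set pconcept n}) : H \subset H' -> lde H k -> lde H' k.
Proof.
elim: k H H' => [|k IH] H H' sHH' /=.
- move=> /set0Pn [h hH]; apply/set0Pn; exists h; exact: (subsetP sHH').
- move=> /existsP [x /andP [h0 h1]]; apply/existsP; exists x; apply/andP; split.
  + by apply: IH h0; apply: restr_mono.
  + by apply: IH h1; apply: restr_mono.
Qed.

Definition ones n (h : pconcept n) := [set x | h x == Some true].

Lemma lde_ones n k (H : {set pconcept n}) (A : {set 'I_n}) :
  lde H k -> (forall h, h \in H -> forall x, x \in A -> h x = Some true) ->
  exists2 h, h \in H & #|A| + k <= #|ones h|.
Proof.
elim: k H A => [|k IH] H A /=.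
- move=> /set0Pn [h hH] hA; exists h => //; rewrite addn0.
  apply: subset_leq_card; apply/subsetP => x xA; by rewrite inE hA.
- move=> /existsP [x /andP [h0 h1]] hA.
  case xA: (x \in A).
  + suff E: restr H x false = set0 by rewrite E lde_set0 in h0.
    apply/setP => h; rewrite !inE; apply/negbTE; apply/negP => /andP [hH /eqP].
    by rewrite hA.
  + have hA' : forall h, h \in restr H x true -> forall y, y \in x |: A -> h y = Some true.
      move=> h; rewrite !inE => /andP [hH /eqP hx] y; rewrite !inE.
      by case/orP => [/eqP -> //| yA]; apply: hA.
    have [h hH hc] := IH _ (x |: A) h1 hA'.
    exists h; first by move: hH; rewrite inE => /andP [].
    rewrite cardsU1 xA /= in hc; lia.
Qed.

Lemma LD_set0 n : LD (set0 : {set pconcept n}) = (-1)%R.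
Proof. by rewrite /LD eqxx. Qed.

Lemma LD_ge0 n (H : {set pconcept n}) : H != set0 -> (0 <= LD H)%R.
Proof. by move=> nz; rewrite /LD (negbTE nz). Qed.

Lemma LD_upper n (H : {set pconcept n}) c :
  (forall h, h \in H -> #|ones h| <= c) -> (LD H <= Posz c)%R.
Proof.
move=> hc; rewrite /LD; case: ifP => _ //.
rewrite lez_nat; apply/bigmax_leqP => k hk.
have [h hH] := lde_ones (A := set0) hk (fun h _ x xin => ltac:(by rewrite inE in xin)).
rewrite cards0 add0n => le; exact: leq_trans le (hc h hH).
Qed.

Lemma LD_lower n (H : {set pconcept n}) k : k <= n -> lde H k -> (Posz k <= LD H)%R.
Proof.
move=> kn hk; rewrite /LD; case: ifP => [/eqP E|_].
  by rewrite E lde_set0 in hk.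
rewrite lez_nat; exact: (@leq_bigmax_cond _ _ _ (Ordinal (kn : k < n.+1))).
Qed.

Lemma le_Nn r d : d * 2 ^ r <= d * (2 ^ r + r).
Proof. by rewrite leq_mul2l leq_addr orbT. Qed.

Definition emb r d (y : 'I_(d * 2 ^ r)) : 'I_(d * (2 ^ r + r)) := widen_ord (le_Nn r d) y.

Lemma hijE r d (F : 'I_('C(d * 2 ^ r, d)) -> {set 'I_(d * 2 ^ r)}) i j (x : 'I_(d * (2 ^ r + r))) :
  hij F i j x = if val x < d * 2 ^ r then Some [exists y in F i, val y == val x]
                else if val x == d * 2 ^ r + j then beta d r i j else None.
Proof. by rewrite ffunE. Qed.

Lemma hij_emb r d (F : 'I_('C(d * 2 ^ r, d)) -> {set 'I_(d * 2 ^ r)}) i j y : hij F i j (emb y) = Some (y \in F i).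
Proof.
rewrite hijE /= ltn_ord; congr Some; apply/existsP/idP.
  by case=> z /andP [zF /eqP /val_inj <-].
by move=> yF; exists y; rewrite yF eqxx.
Qed.

Definition GAB r d (F : 'I_('C(d * 2 ^ r, d)) -> {set 'I_(d * 2 ^ r)}) (A B : {set 'I_(d * 2 ^ r)}) : {set pconcept (d * (2 ^ r + r))} :=
  [set h in Hclass F | [forall y in A, h (emb y) == Some true] &&
                       [forall y in B, h (emb y) == Some false]].

Lemma lower_gen r d (F : 'I_('C(d * 2 ^ r, d)) -> {set 'I_(d * 2 ^ r)}) (Fonto : forall S : {set 'I_(d * 2 ^ r)}, #|S| = d -> exists i, F i = S)
  (j0 : 'I_(d * r)) m :
  forall A B : {set 'I_(d * 2 ^ r)}, (forall y, y \in A -> y \notin B) ->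
  #|A| + m <= d -> #|B| + m <= d * 2 ^ r - d -> lde (GAB F A B) m.
Proof.
have dN : d <= d * 2 ^ r by rewrite leq_pmulr // expn_gt0.
elim: m => [|m IH] A B dAB cA cB /=.
- set U := ~: (A :|: B).
  have cU : d - #|A| <= #|U|.
    have := cardsC (A :|: B); rewrite card_ord -/U cardsU.
lia.
  set T := [set x in take (d - #|A|) (enum U)].
  have cT : #|T| = d - #|A|.
    rewrite /T cardsE (card_uniqP _); last by rewrite take_uniq // enum_uniq.
    by rewrite size_takel // -cardE.
  have TU : forall x, x \in T -> x \in U.
    by move=> x; rewrite inE => /mem_take; rewrite mem_enum.
  have AT : A :&: T = set0.
    apply/setP => x; rewrite in_setI in_set0; case xA: (x \in A) => //=.
    apply/negbTE/negP => /TU; by rewrite !inE xA.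
  have [i Fi] := Fonto (A :|: T) ltac:(by rewrite cardsU AT cards0 cT; lia).
  apply/set0Pn; exists (hij F i j0); rewrite inE; apply/and3P; split.
  + by apply/imset2P; exists i j0.
  + apply/forallP => y; apply/implyP => yA; by rewrite hij_emb Fi !inE yA.
  + apply/forallP => y; apply/implyP => yB; rewrite hij_emb Fi in_setU.
    case yA: (y \in A); first by rewrite (negbTE (dAB _ yA)) in yB.
    case yT: (y \in T) => //; have := TU _ yT; by rewrite !inE yA yB.
- have [x xU] : exists x, x \in ~: (A :|: B).
    apply/set0Pn; rewrite -card_gt0.
    have := cardsC (A :|: B); rewrite card_ord cardsU.
    lia.
  move: xU; rewrite !inE negb_or => /andP [xA xB].
  apply/existsP; exists (emb x); apply/andP; split.
  + apply: (@lde_mono _ _ (GAB F A (x |: B))).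
      apply/subsetP => h; rewrite !inE => /and3P [hH hA hB].
      rewrite hH hA /=; apply/andP; split.
        apply/forallP => y; apply/implyP => yB.
        by move/forallP: hB => /(_ y); rewrite !inE yB orbT.
      by move/forallP: hB => /(_ x); rewrite !inE eqxx.
    apply: IH.
    * move=> y yA; rewrite !inE negb_or (dAB _ yA) andbT.
      by apply/eqP => E; rewrite -E yA in xA.
    * lia.
    * by rewrite cardsU1 xB /= add1n addSn -addnS.
  + apply: (@lde_mono _ _ (GAB F (x |: A) B)).
      apply/subsetP => h; rewrite !inE => /and3P [hH hA hB].
      rewrite hH hB /= andbT; apply/andP; split.
        apply/forallP => y; apply/implyP => yA.
        by move/forallP: hA => /(_ y); rewrite !inE yA orbT.
      by move/forallP: hA => /(_ x); rewrite !inE eqxx.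
    apply: IH.
    * move=> y; rewrite !inE => /orP [/eqP -> //| yA]; exact: dAB.
    * by rewrite cardsU1 xA /= add1n addSn -addnS.
    * lia.
Qed.

Lemma n_eq r d : d * (2 ^ r + r) = d * 2 ^ r + d * r.
Proof. by rewrite mulnDr. Qed.

Lemma ones_hij r d (F : 'I_('C(d * 2 ^ r, d)) -> {set 'I_(d * 2 ^ r)})
  (Fcard : forall i, #|F i| = d) i j : #|ones (hij F i j)| <= d + 1.
Proof.
have lt : d * 2 ^ r + j < d * (2 ^ r + r) by rewrite n_eq ltn_add2l.
set y0 := Ordinal lt.
have sub : ones (hij F i j) \subset @emb r d @: F i :|: [set y0].
  apply/subsetP => x; rewrite inE hijE.
  case: ifP => [xN | xN].
    move=> /eqP [] /existsP [y /andP [yF /eqP E]].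
    rewrite in_setU; apply/orP; left; apply/imsetP; exists y => //.
    by apply/val_inj; rewrite /= E.
  case: ifP => // /eqP E _; rewrite !inE; apply/orP; right; apply/eqP/val_inj.
  by rewrite /= E.
apply: leq_trans (subset_leq_card sub) _.
rewrite cardsU cards1.
apply: leq_trans (leq_subr _ _) _; rewrite leq_add2r.
apply: leq_trans (leq_imset_card _ _) _; by rewrite Fcard.
Qed.

Lemma bits_exist L (b : nat -> bool) :
  exists i, i < 2 ^ L /\ forall j, j < L -> odd (i %/ 2 ^ j) = b j.
Proof.
elim: L b => [|L IH] b.
  by exists 0; split => // j.
have [i' [lt' P']] := IH (fun j => b j.+1).
exists (b 0 + i'.*2); split.
  rewrite expnS; case: (b 0) => /=; lia.
case=> [|j] jL.
  by rewrite expn0 divn1 oddD odd_double addbF; case: (b 0).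
rewrite expnS divnMA divn2 half_bit_double -P' //.
Qed.

Lemma binom_ge r d : 2 ^ (d * r) <= 'C(d * 2 ^ r, d).
Proof.
have key : forall t, t <= d -> d ^_ t * 2 ^ (r * t) <= (d * 2 ^ r) ^_ t.
  elim=> [|t IH] td; first by rewrite !ffactn0 muln0 expn0.
  rewrite !ffactnSr mulnS expnD.
  have h1 := IH (ltnW td).
  have h2 : (d - t) * 2 ^ r <= d * 2 ^ r - t.
    have : 1 <= 2 ^ r by rewrite expn_gt0.
    rewrite mulnBl; nia.
  have E : d ^_ t * (d - t) * (2 ^ r * 2 ^ (r * t)) =
           (d ^_ t * 2 ^ (r * t)) * ((d - t) * 2 ^ r) by nia.
  by rewrite E; apply: leq_mul.
have := key d (leqnn d); rewrite ffactnn -bin_ffact mulnC [r * d]mulnC.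
by rewrite leq_pmul2r ?fact_gt0.
Qed.

Definition Pinv r d (F : 'I_('C(d * 2 ^ r, d)) -> {set 'I_(d * 2 ^ r)}) (m : nat)
  (i : 'I_('C(d * 2 ^ r, d))) (j : 'I_(d * r)) (g : pconcept (d * (2 ^ r + r))) : Prop :=
  [/\ (forall x : 'I_(d * (2 ^ r + r)), m <= val x -> g x = hij F i j x),
      (forall x : 'I_(d * (2 ^ r + r)), val x < d * 2 ^ r -> g x = hij F i j x) &
      (val i < 2 ^ (d * r) -> forall x : 'I_(d * (2 ^ r + r)), d * 2 ^ r <= val x ->
         val x < m -> val x < d * 2 ^ r + d * r ->
         g x = Some (odd (val i %/ 2 ^ (val x - d * 2 ^ r))))].

Definition Inv r d (F : 'I_('C(d * 2 ^ r, d)) -> {set 'I_(d * 2 ^ r)}) (m : nat)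
  (G : {set pconcept (d * (2 ^ r + r))}) : Prop :=
  (forall g, g \in G -> exists i j, Pinv F m i j g) /\
  (forall i j, exists2 g, g \in G & Pinv F m i j g).

Lemma hij_low r d (F : 'I_('C(d * 2 ^ r, d)) -> {set 'I_(d * 2 ^ r)}) i j j' x :
  val x < d * 2 ^ r -> hij F i j x = hij F i j' x.
Proof. by move=> xN; rewrite !hijE xN. Qed.

Lemma agree_i r d (F : 'I_('C(d * 2 ^ r, d)) -> {set 'I_(d * 2 ^ r)}) (Finj : injective F)
  i j i' j' :
  (forall x : 'I_(d * (2 ^ r + r)), val x < d * 2 ^ r -> hij F i j x = hij F i' j' x) ->
  i = i'.
Proof.
move=> H; apply: Finj; apply/setP => y.
by have := H (emb y) (ltn_ord y); rewrite !hij_emb => -[].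
Qed.

Lemma hij_top r d (F : 'I_('C(d * 2 ^ r, d)) -> {set 'I_(d * 2 ^ r)}) i j
  (x : 'I_(d * (2 ^ r + r))) :
  d * 2 ^ r <= val x -> hij F i j x =
     if val x == d * 2 ^ r + j then beta d r i j else None.
Proof. by move=> Nx; rewrite hijE ltnNge Nx. Qed.

Lemma soa_choiceE r d (F : 'I_('C(d * 2 ^ r, d)) -> {set 'I_(d * 2 ^ r)}) (Finj : injective F)
  m G (k : 'I_(d * (2 ^ r + r))) i j h :
  Inv F m G -> val k = m -> Pinv F m i j h -> val i < 2 ^ (d * r) ->
  d * 2 ^ r <= m -> m < d * 2 ^ r + d * r ->
  soa_choice G k h = odd (val i %/ 2 ^ (m - d * 2 ^ r)).
Proof.
move=> [I1 I2] km [h1 h2 h3] iL Nm mL.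
have jjL : m - d * 2 ^ r < d * r by lia.
set jj := Ordinal jjL.
set bit := odd (val i %/ 2 ^ (m - d * 2 ^ r)).
have ne : soa_restr G k h bit != set0.
  have [g gG [g1 g2 g3]] := I2 i jj.
  apply/set0Pn; exists g; rewrite inE gG /=; apply/andP; split.
    apply/forallP => y; apply/implyP => yk.
    case: (ltnP (val y) (d * 2 ^ r)) => yN.
      by rewrite g2 // h2 // (hij_low _ _ _ j).
    have yk' : val y < m by rewrite -km; exact: yk.
    rewrite g3 ?h3 //; move: yk' yN; set v := val y; lia.
  rewrite g1; last by rewrite km.
  rewrite hij_top; last by rewrite km.
  case: ifP => [_|/eqP ne].
    rewrite /beta; case: ifP => [_|/negP H]; last by exfalso; exact: H iL.
    by apply/eqP.
  exfalso; apply: ne; apply: etrans km _; rewrite /= subnKC //.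
have e : soa_restr G k h (~~ bit) = set0.
  apply/setP => g; rewrite !inE; apply/negbTE/negP => /andP [gG /andP [agr gk]].
  have [i' [j' [g1 g2 g3]]] := I1 g gG.
  have ii : i = i'.
    apply: (agree_i Finj (j := j) (j' := j')) => x xN.
    rewrite -h2 // -g2 //; apply/esym/eqP.
    have kge : d * 2 ^ r <= k by move: Nm; rewrite -km.
    move/forallP: agr => /(_ x) /implyP; apply; exact: leq_trans xN kge.
  move: gk; rewrite g1; last by rewrite km.
  rewrite hij_top; last by rewrite km.
  rewrite -ii; case: ifP => [/eqP E|_] //.
  rewrite /beta; case: ifP => [_|/negP H]; last by exfalso; exact: H iL.
  move/eqP => [].
  have E' : m = d * 2 ^ r + j' := etrans (esym km) E.
  have -> : odd (i %/ 2 ^ j') = bit by rewrite /bit E' addKn.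
  by move: ne; case: bit.
rewrite /soa_choice.
case Eb: bit e ne => e ne; rewrite e LD_set0.
  by apply: (Order.POrderTheory.lt_le_trans (y := 0%R)) => //; apply: LD_ge0.
by apply/negbTE; rewrite -Order.TotalTheory.leNgt; apply: (Order.POrderTheory.le_trans (y := 0%R)) => //; apply: LD_ge0.
Qed.

Lemma step_P r d (F : 'I_('C(d * 2 ^ r, d)) -> {set 'I_(d * 2 ^ r)}) (Finj : injective F)
  m G (k : 'I_(d * (2 ^ r + r))) i j h :
  Inv F m G -> val k = m -> Pinv F m i j h -> Pinv F m.+1 i j (soa_upd G k h).
Proof.
move=> I km hP; have [h1 h2 h3] := hP.
rewrite /soa_upd; case hk: (h k) => [b|].
- split.
  + by move=> x xm; apply: h1; apply: ltnW.
  + exact: h2.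
  + move=> iL x Nx xm xL; case: (ltnP (val x) m) => [xlt|xge]; first exact: h3.
    have xE : val x = m by apply/eqP; rewrite eqn_leq xge andbT -ltnS.
    have xk : x = k by apply: val_inj; exact: etrans xE (esym km).
    rewrite xk hk.
    have := h1 k ltac:(by rewrite km); rewrite hk hij_top; last by rewrite km -xE.
    case: ifP => [/eqP E|] //.
    rewrite /beta; case: ifP => [_|/negP H]; last by exfalso; exact: H iL.
    move=> ->; congr (Some (odd (_ %/ 2 ^ _))).
    have E' : val x = d * 2 ^ r + j := etrans (etrans xE (esym km)) E.
    apply: esym; apply: etrans (congr1 (fun t => t - d * 2 ^ r) E) _.
    by rewrite addKn.
- split.
  + move=> x xm; rewrite ffunE; case: eqP => [xk|_].
      by exfalso; move: xm; rewrite xk km ltnn.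
    by apply: h1; apply: ltnW.
  + move=> x xN; rewrite ffunE; case: eqP => [xk|_]; last exact: h2.
    by exfalso; move: hk; rewrite -xk h2 // hijE xN.
  + move=> iL x Nx xm xL; rewrite ffunE; case: eqP => [xk|xk].
      have xE : val x = m by rewrite xk.
      congr Some; rewrite (soa_choiceE Finj I km hP iL); try by rewrite -xE.
    rewrite ltnS leq_eqVlt in xm; case/orP: xm => [/eqP E|xlt]; last exact: h3.
    by exfalso; apply: xk; apply: val_inj; exact: etrans E (esym km).
Qed.

Lemma Inv_step r d (F : 'I_('C(d * 2 ^ r, d)) -> {set 'I_(d * 2 ^ r)}) (Finj : injective F)
  m G (k : 'I_(d * (2 ^ r + r))) :
  Inv F m G -> val k = m -> Inv F m.+1 (soa_step k G).
Proof.
move=> I km; split.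
- move=> g /imsetP [h hG ->]; have [i [j hP]] := I.1 h hG.
  by exists i, j; apply: step_P.
- move=> i j; have [h hG hP] := I.2 i j.
  exists (soa_upd G k h); first exact: imset_f.
  exact: step_P.
Qed.

Lemma Inv_fold r d (F : 'I_('C(d * 2 ^ r, d)) -> {set 'I_(d * 2 ^ r)}) (Finj : injective F)
  (s : seq 'I_(d * (2 ^ r + r))) :
  forall m G, Inv F m G -> map val s = iota m (size s) ->
  Inv F (m + size s) (foldl (fun H' k => soa_step k H') G s).
Proof.
elim: s => [|k s IH] m G I /=; first by rewrite addn0.
case=> km sE; rewrite -addSnnS; apply: IH sE.
exact: Inv_step.
Qed.

Lemma Inv0 r d (F : 'I_('C(d * 2 ^ r, d)) -> {set 'I_(d * 2 ^ r)}) : Inv F 0 (Hclass F).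
Proof.
split.
- move=> g /imset2P [i j _ _ ->]; exists i, j; split => //.
- move=> i j; exists (hij F i j); first by apply/imset2P; exists i j.
  by split.
Qed.

Lemma SOA_Inv r d (F : 'I_('C(d * 2 ^ r, d)) -> {set 'I_(d * 2 ^ r)}) (Finj : injective F) :
  Inv F (d * (2 ^ r + r)) (SOA (Hclass F)).
Proof.
rewrite /SOA; have := @Inv_fold r d F Finj (enum 'I_(d * (2 ^ r + r))) 0 (Hclass F) (Inv0 F).
rewrite size_enum_ord; apply.
by rewrite val_enum_ord.
Qed.

Lemma lt_top r d (j : 'I_(d * r)) : d * 2 ^ r + j < d * (2 ^ r + r).
Proof. by rewrite n_eq ltn_add2l ltn_ord. Qed.

Unset Implicit Arguments.
Theorem mainTheorem5 (r d : nat) (hr : 1 <= r) (hd : 1 <= d)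
  (F : 'I_('C(d * 2 ^ r, d)) -> {set 'I_(d * 2 ^ r)})
  (Finj : injective F)
  (Fcard : forall i, #|F i| = d)
  (Fonto : forall S : {set 'I_(d * 2 ^ r)}, #|S| = d -> exists i, F i = S) :
  ((Posz d <= LD (Hclass F))%R /\ (LD (Hclass F) <= Posz d + 1)%R) /\
  shatters (SOA (Hclass F))
    [set x : 'I_(d * (2 ^ r + r)) | d * 2 ^ r <= val x < d * 2 ^ r + d * r] /\
  d * r <= VCdim (SOA (Hclass F)).
Proof.
have dr0 : 0 < d * r by rewrite muln_gt0 hd hr.
set j0 : 'I_(d * r) := Ordinal dr0.
have two : 2 <= 2 ^ r by rewrite -{1}(expn1 2) leq_exp2l.
have dN : d <= d * 2 ^ r by rewrite leq_pmulr // expn_gt0.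
have Nn := le_Nn r d.
have shat : shatters (SOA (Hclass F))
    [set x : 'I_(d * (2 ^ r + r)) | d * 2 ^ r <= val x < d * 2 ^ r + d * r].
  apply/forallP => f.
  have n0 : 0 < d * (2 ^ r + r) by lia.
  set x0 : 'I_(d * (2 ^ r + r)) := Ordinal n0.
  have [i0 [i0L P']] := bits_exist (d * r) (fun t => f (insubd x0 (d * 2 ^ r + t))).
  have i0C : i0 < 'C(d * 2 ^ r, d) := leq_trans i0L (binom_ge r d).
  set i : 'I_('C(d * 2 ^ r, d)) := Ordinal i0C.
  have [g gS [g1 g2 g3]] := (SOA_Inv Finj).2 i j0.
  apply/existsP; exists g; rewrite gS /=; apply/forallP => x; apply/implyP.
  rewrite inE => /andP [Nx xL].
  rewrite g3 //= P'; last by lia.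
  have -> : insubd x0 (d * 2 ^ r + (x - d * 2 ^ r)) = x.
    by apply/val_inj; rewrite val_insubd subnKC // ltn_ord.
  by [].
split; first split.
{ apply: LD_lower; first exact: leq_trans dN Nn.
  apply: (@lde_mono _ _ (GAB F set0 set0)).
    by apply/subsetP => h; rewrite inE => /andP [].
  apply: (lower_gen Fonto j0).
    by move=> y; rewrite inE.
    by rewrite cards0.
  rewrite cards0 add0n; nia. }
{ have U : (LD (Hclass F) <= Posz (d + 1))%R.
    apply: LD_upper => h /imset2P [i j _ _ ->]; exact: ones_hij.
  exact: U. }
split; first exact: shat.
rewrite /VCdim.
have := @leq_bigmax_cond _ (fun S => shatters (SOA (Hclass F)) S) (fun S => #|S|) _ shat.
move=> M; apply: leq_trans M.
set g := fun j : 'I_(d * r) => Ordinal (lt_top j).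
have ginj : injective g.
  move=> a b /(congr1 val) /= /addnI E; exact: val_inj.
have sub : g @: [set: 'I_(d * r)] \subset
     [set x : 'I_(d * (2 ^ r + r)) | d * 2 ^ r <= val x < d * 2 ^ r + d * r].
  apply/subsetP => x /imsetP [j _ ->]; rewrite inE /= leq_addr /=.
  by rewrite ltn_add2l ltn_ord.
apply: leq_trans _ (subset_leq_card sub).
by rewrite card_imset // cardsT card_ord.
Qed.
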